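(* Let $X$ be a separated metric compact Hausdorff space with metric $d$, let $\gamma$ be an equivalence continuous submetric on $X$, and let $A=\{a\in X\mid\gamma((a,0),(a,1))=0\}$ (which equals $\{a\in X\mid\gamma((a,1),(a,0))=0\}$). Then $\gamma$ is effective if and only if for all $x,y\in X$ and $i\in\{0,1\}$, $$\gamma((x,i),(y,1-i))=\inf_{a\in A}\big(d(x,a)+d(a,y)\big).$$
   Context: A metric on a set $X$ is a map $d\colon X\times X\to[0,\infty]$ with $d(x,x)=0$ and $d(x,z)\le d(x,y)+d(y,z)$ (not necessarily symmetric, $\infty$ allowed); separated means $d(x,y)=0=d(y,x)$ implies $x=y$. A separated metric compact Hausdorff space is a compact Hausdorff space with a separated metric continuous $X\times X\to[0,\infty]$ for the upper topology on $[0,\infty]$ (open sets $]u,\infty]$); $\mathbf{MetCH_{sep}}$ is the category of these with continuous non-expansive maps. $X+X$ is the coproduct with elements $(x,i)$, $i\in\{0,1\}$, coproduct topology and metric $d((x,i),(y,i))=d(x,y)$, $d((x,i),(y,1-i))=\infty$. A binary continuous submetric on $X$ is a (not necessarily separated) metric $\gamma$ on $X+X$, continuous for the upper topology, below the coproduct metric. Its associated corelation is $\binom{q_0}{q_1}\colon X+X\to S:=(X+X)/{\sim_\gamma}$ where $u\sim_\gamma v$ iff $\gamma(u,v)=\gamma(v,u)=0$, $S$ has quotient topology and metric $([u],[v])\mapsto\gamma(u,v)$, $q_i(x)=[(x,i)]$. The corelation is reflexive if there is a morphism $e\colon S\to X$ with $e q_0=e q_1=1_X$; symmetric if there is $s\colon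 S\to S$ with $s q_0=q_1$, $s q_1=q_0$; transitive if, with $\lambda_0,\lambda_1\colon S\to P$ the pushout of $q_1$ and $q_0$ (so $\lambda_0 q_1=\lambda_1 q_0$), there is $t\colon S\to P$ with $t q_0=\lambda_0 q_0$, $t q_1=\lambda_1 q_1$; $\gamma$ is an equivalence continuous submetric if its corelation is all three. $\gamma$ is effective if, with $i\colon E\to X$ the equaliser of $q_0,q_1$ in $\mathbf{MetCH_{sep}}$, the square $q_0\circ i=q_1\circ i$ is a pushout in $\mathbf{MetCH_{sep}}$. *)

(* Defs.v *)
From HB Require Import structures.
From mathcomp Require Import all_boot all_order all_algebra generic_quotient.
From mathcomp Require Import all_classical all_reals topology.
From mathcomp Require Import ereal.

Set Implicit Arguments.
Unset Strict Implicit.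
Unset Printing Implicit Defensive.

Import Order.TTheory GRing.Theory Num.Theory.
Local Open Scope classical_set_scope.
Local Open Scope ring_scope.
Local Open Scope ereal_scope.
Local Open Scope quotient_scope.

(* Objects of MetCH_sep : compact Hausdorff spaces equipped with a separated
   [0,oo]-valued (not necessarily symmetric) metric, continuous for the upper
   topology on [0,oo] (i.e. every set {(x,y) | u < d x y} is open in X x X). *)
Record MetCH (R : realType) := MkMetCH {
  mc_T :> topologicalType;
  mc_d : mc_T -> mc_T -> \bar R;
  mc_compact : compact [set: mc_T];
  mc_hausdorff : hausdorff_space mc_T;
  mc_d_ge0 : forall x y, 0 <= mc_d x y;
  mc_d_refl : forall x, mc_d x x = 0;
  mc_d_triangle : forall x y z, mc_d x z <= mc_d x y + mc_d y z;
  mc_d_sep : forall x y, mc_d x y = 0 -> mc_d y x = 0 -> x = y;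
  mc_d_cont : forall u : \bar R, open [set p : mc_T * mc_T | u < mc_d p.1 p.2]
}.
Arguments mc_d {R} m : rename.

Definition is_mor (R : realType) (T1 T2 : topologicalType)
  (d1 : T1 -> T1 -> \bar R) (d2 : T2 -> T2 -> \bar R) (f : T1 -> T2) : Prop :=
  continuous f /\ (forall x y, d2 (f x) (f y) <= d1 x y).

(* The coproduct X + X is represented by X * bool (bool discrete), the
   element (x, i) being the copy of x in summand i (false = 0, true = 1). *)
Definition coprod_d (R : realType) (X : MetCH R) (u v : X * bool) : \bar R :=
  if u.2 == v.2 then mc_d X u.1 v.1 else +oo.

Record submetric (R : realType) (X : MetCH R) := MkSubmetric {
  sm_g :> X * bool -> X * bool -> \bar R;
  sm_ge0 : forall u v, 0 <= sm_g u v;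
  sm_refl : forall u, sm_g u u = 0;
  sm_triangle : forall u v w, sm_g u w <= sm_g u v + sm_g v w;
  sm_cont : forall u : \bar R,
     open [set p : (X * bool) * (X * bool) | u < sm_g p.1 p.2];
  sm_le : forall u v, sm_g u v <= coprod_d u v
}.

Section Corelation.
Variables (R : realType) (X : MetCH R) (g : submetric X).

Definition sm_rel (u v : X * bool) : bool := `[< g u v = 0 /\ g v u = 0 >].

Lemma sm_rel_refl : reflexive sm_rel.
Proof. by move=> u; apply/asboolP; rewrite sm_refl. Qed.

Lemma sm_rel_sym : symmetric sm_rel.
Proof.
move=> u v; apply/asboolP/asboolP => -[] *; by split.
Qed.

Lemma sm_rel_trans : transitive sm_rel.
Proof.
have H : forall a b c, g a b = 0 -> g b c = 0 -> g a c = 0.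
  move=> a b c h1 h2; apply/eqP; rewrite eq_le sm_ge0 andbT.
  by have := sm_triangle g a b c; rewrite h1 h2 adde0.
move=> v u w /asboolP [h1 h2] /asboolP [h3 h4]; apply/asboolP.
by split; [exact: (H _ v) | exact: (H _ v)].
Qed.

Definition sm_equiv : equiv_rel (X * bool) :=
  EquivRel sm_rel sm_rel_refl sm_rel_sym sm_rel_trans.

Definition sm_S : topologicalType := quotient_topology {eq_quot sm_equiv}.

(* metric on S : ([u],[v]) |-> gamma(u,v) (well defined by the triangle
   inequality; computed on chosen representatives) *)
Definition sm_dS (a b : sm_S) : \bar R :=
  g (repr (a : {eq_quot sm_equiv})) (repr (b : {eq_quot sm_equiv})).

Definition sm_q (i : bool) (x : X) : sm_S :=
  (\pi_({eq_quot sm_equiv}) (x, i) : {eq_quot sm_equiv}).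

End Corelation.
Arguments sm_S {R X} g.
Arguments sm_dS {R X} g.
Arguments sm_q {R X} g i x.

Definition is_pushout (R : realType) (A : Type) (B C D : topologicalType)
  (dB : B -> B -> \bar R) (dC : C -> C -> \bar R) (dD : D -> D -> \bar R)
  (f : A -> B) (g : A -> C) (h : B -> D) (k : C -> D) : Prop :=
  [/\ is_mor dB dD h, is_mor dC dD k, h \o f = k \o g &
    forall (Z : MetCH R) (h' : B -> Z) (k' : C -> Z),
      is_mor dB (mc_d Z) h' -> is_mor dC (mc_d Z) k' -> h' \o f = k' \o g ->
      exists u : D -> Z, (is_mor dD (mc_d Z) u /\ u \o h = h' /\ u \o k = k') /\
        forall u' : D -> Z,
          (is_mor dD (mc_d Z) u' /\ u' \o h = h' /\ u' \o k = k') -> u' = u].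

Definition is_equaliser (R : realType) (E X : MetCH R) (Y : topologicalType)
  (dY : Y -> Y -> \bar R) (i : E -> X) (f g : X -> Y) : Prop :=
  [/\ is_mor (mc_d E) (mc_d X) i, f \o i = g \o i &
    forall (Z : MetCH R) (j : Z -> X),
      is_mor (mc_d Z) (mc_d X) j -> f \o j = g \o j ->
      exists u : Z -> E, (is_mor (mc_d Z) (mc_d E) u /\ i \o u = j) /\
        forall u' : Z -> E, (is_mor (mc_d Z) (mc_d E) u' /\ i \o u' = j) -> u' = u].

Section Properties.
Variables (R : realType) (X : MetCH R) (g : submetric X).
Local Notation S := (sm_S g).
Local Notation dS := (sm_dS g).
Local Notation q0 := (sm_q g false).
Local Notation q1 := (sm_q g true).

Definition corel_reflexive : Prop :=
  exists e : S -> X, is_mor dS (mc_d X) e /\ e \o q0 = id /\ e \o q1 = id.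

Definition corel_symmetric : Prop :=
  exists s : S -> S, is_mor dS dS s /\ s \o q0 = q1 /\ s \o q1 = q0.

Definition corel_transitive : Prop :=
  forall (P : MetCH R) (l0 l1 : S -> P),
    is_pushout dS dS (mc_d P) q1 q0 l0 l1 ->
    exists t : S -> P, is_mor dS (mc_d P) t /\
      t \o q0 = l0 \o q0 /\ t \o q1 = l1 \o q1.

Definition equivalence_submetric : Prop :=
  [/\ corel_reflexive, corel_symmetric & corel_transitive].

Definition effective : Prop :=
  forall (E : MetCH R) (i : E -> X),
    is_equaliser dS i q0 q1 ->
    is_pushout (mc_d X) (mc_d X) dS i i q0 q1.

End Properties.

(* Main.v *)
Require Import Defs.
From HB Require Import structures.
From mathcomp Require Import all_boot all_order all_algebra generic_quotient.
From mathcomp Require Import all_classical all_reals topology ereal.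
From mathcomp Require Import lra.
Set Implicit Arguments.
Unset Strict Implicit.
Unset Printing Implicit Defensive.
Import Order.TTheory GRing.Theory Num.Theory.
Local Open Scope classical_set_scope.
Local Open Scope ereal_scope.
Local Open Scope quotient_scope.

Section Basic.
Variables (R : realType) (X : MetCH R) (g : submetric X).

Lemma sm_piP (p q : X * bool) :
  (\pi_({eq_quot sm_equiv g}) p = \pi_({eq_quot sm_equiv g}) q :> {eq_quot sm_equiv g})
  <-> (g p q = 0 /\ g q p = 0).
Proof.
split.
- by move=> /eqquotP /asboolP.
- by move=> h; apply/eqquotP; apply/asboolP.
Qed.

Lemma sm_zero_inv (p p' q q' : X * bool) :
  g p p' = 0 -> g p' p = 0 -> g q q' = 0 -> g q' q = 0 -> g p q = g p' q'.
Proof.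
move=> h1 h2 h3 h4; apply/eqP; rewrite eq_le; apply/andP; split.
- apply: (le_trans (sm_triangle g p p' q)); rewrite h1 add0e.
  by apply: (le_trans (sm_triangle g p' q' q)); rewrite h4 adde0.
- apply: (le_trans (sm_triangle g p' p q')); rewrite h2 add0e.
  by apply: (le_trans (sm_triangle g p q q')); rewrite h3 adde0.
Qed.

Lemma sm_dS_pi (p q : X * bool) :
  sm_dS g (\pi_({eq_quot sm_equiv g}) p) (\pi_({eq_quot sm_equiv g}) q) = g p q.
Proof.
rewrite /sm_dS.
have [h1 h2] := (sm_piP _ _).1 (reprK (\pi_({eq_quot sm_equiv g}) p)).
have [h3 h4] := (sm_piP _ _).1 (reprK (\pi_({eq_quot sm_equiv g}) q)).
exact: sm_zero_inv.
Qed.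

End Basic.

Lemma pairb_cont (T : topologicalType) (b : bool) : continuous (fun x : T => (x, b)).
Proof.
move=> x U [[P Q] /= [Px Qb] PQU]; rewrite nbhs_simpl /=.
apply: filterS Px => y Py; apply: PQU; split => //=; exact: nbhs_singleton.
Qed.

Section Basic2.
Variables (R : realType) (X : MetCH R) (g : submetric X).

Lemma sm_q_cont b : continuous (sm_q g b).
Proof.
move=> x; apply: (@continuous_comp _ _ _ (fun x : X => (x, b))
   (\pi_(sm_S g) : X * bool -> sm_S g)).
  exact: pairb_cont.
exact: pi_continuous.
Qed.

Lemma sm_dS_q b b' x y : sm_dS g (sm_q g b x) (sm_q g b' y) = g (x, b) (y, b').
Proof. exact: sm_dS_pi. Qed.

Lemma sm_same : corel_reflexive g -> forall x y b, g (x, b) (y, b) = mc_d X x y.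
Proof.
move=> [e [[_ ne] [e0 e1]]] x y b; apply/eqP; rewrite eq_le; apply/andP; split.
  by have := sm_le g (x, b) (y, b); rewrite /coprod_d eqxx.
have := ne (sm_q g b x) (sm_q g b y); rewrite sm_dS_q.
have ex : forall z, e (sm_q g b z) = z.
  by move=> z; case: b; [move: e1 | move: e0] => /(congr1 (fun f => f z)).
by rewrite !ex.
Qed.

Lemma sm_symA : corel_symmetric g -> forall a,
  g (a, false) (a, true) = 0 -> g (a, true) (a, false) = 0.
Proof.
move=> [s [[_ ns] [s0 s1]]] a h; apply/eqP; rewrite eq_le sm_ge0 andbT.
have := ns (sm_q g false a) (sm_q g true a).
have -> : s (sm_q g false a) = sm_q g true a by rewrite -s0.
have -> : s (sm_q g true a) = sm_q g false a by rewrite -s1.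
by rewrite !sm_dS_q h.
Qed.

Lemma sm_q_eq a : g (a, false) (a, true) = 0 -> g (a, true) (a, false) = 0 ->
  sm_q g false a = sm_q g true a.
Proof. by move=> h1 h2; apply/(sm_piP g). Qed.

Lemma sm_q_eqE a : sm_q g false a = sm_q g true a -> g (a, false) (a, true) = 0.
Proof. by move=> /(sm_piP g) []. Qed.

End Basic2.

Lemma sep_lsc_hausdorff (R : realType) (T : topologicalType) (d : T -> T -> \bar R) :
  (forall x, d x x = 0) -> (forall x y, d x y = 0 -> d y x = 0 -> x = y) ->
  (forall x y, 0 <= d x y) ->
  (forall u, open [set p : T * T | u < d p.1 p.2]) -> hausdorff_space T.
Proof.
move=> drefl dsep dge0 dcont p q clpq.
have key : forall a b, 0 < d a b -> cluster (nbhs a) b \/ cluster (nbhs b) a -> False.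
  move=> a b dab cl.
  have : nbhs (a, b) [set p : T * T | 0 < d p.1 p.2].
    by apply: open_nbhs_nbhs; split; [exact: dcont|].
  move=> [[P Q] /= [Pa Qb] PQW].
  case: cl => cl.
  - have [z [Pz Qz]] := cl P Q Pa Qb.
    by have := PQW (z, z) (conj Pz Qz); rewrite /= drefl ltxx.
  - have [z [Qz Pz]] := cl Q P Qb Pa.
    by have := PQW (z, z) (conj Pz Qz); rewrite /= drefl ltxx.
apply: dsep.
- apply/eqP; apply/negPn/negP => h.
  have : 0 < d p q by rewrite lt_def h dge0.
  by move/key; apply; left.
- apply/eqP; apply/negPn/negP => h.
  have : 0 < d q p by rewrite lt_def h dge0.
  by move/key; apply; right.
Qed.

Lemma prod_map_cont (T1 T2 U1 U2 : topologicalType) (f : T1 -> T2) (h : U1 -> U2) :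
  continuous f -> continuous h -> continuous (fun p : T1 * U1 => (f p.1, h p.2)).
Proof.
move=> cf ch p W [[P Q] /= [Pf Qh] PQW]; rewrite nbhs_simpl /=.
exists (f @^-1` P, h @^-1` Q) => /=.
  by split; [exact: cf | exact: ch].
by move=> [x y] /= [Px Qy]; apply: PQW.
Qed.

Section SubT.
Variables (R : realType) (X : MetCH R) (C : set X).
Hypothesis Ccl : closed C.

Lemma subT_compact : compact [set: set_type C].
Proof.
move=> F PF _.
pose G := (set_val : set_type C -> X) @ F.
have GC : G C.
  rewrite /G /= /fmap /=; apply: filterS (filterT) => y _ /=; exact: set_valP.
have cX : compact (setT `&` C) by apply: compact_closedI => //; exact: mc_compact.
have [x [[_ Cx] clx]] := cX G (fmap_proper_filter _ PF) (filterS (fun _ h => conj I h) GC).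
exists (SigSub (mem_set Cx)); split => //.
move=> U V FU.
rewrite nbhsE => -[B [oB Bx] BV].
move: oB => [O oO OB].
have GU : G (set_val @` U).
  by rewrite /G /= /fmap /=; apply: filterS FU => u Uu; exists u.
have nO : nbhs x O.
  apply: open_nbhs_nbhs; split => //.
  by move: Bx; rewrite -OB.
have [y [[u Uu <-] Ou]] := clx _ _ GU nO.
exists u; split => //; apply: BV; rewrite -OB; exact: Ou.
Qed.

Definition subT_d (a b : set_type C) : \bar R := mc_d X (set_val a) (set_val b).

Lemma subT_cont : continuous (set_val : set_type C -> X).
Proof. exact: initial_continuous. Qed.

Lemma subT_d_cont u : open [set p : set_type C * set_type C | u < subT_d p.1 p.2].
Proof.
have hc := prod_map_cont subT_cont subT_cont.
move/continuousP: hc => hc.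
have := hc _ (@mc_d_cont R X u).
congr open.
Qed.

Lemma subT_sep a b : subT_d a b = 0 -> subT_d b a = 0 -> a = b.
Proof. by move=> h1 h2; apply: val_inj; exact: (mc_d_sep h1 h2). Qed.

Definition subT_MetCH : MetCH R :=
  @MkMetCH R (set_type C) subT_d subT_compact
    (sep_lsc_hausdorff (fun x => @mc_d_refl R X (set_val x)) subT_sep
       (fun x y => @mc_d_ge0 R X _ _) subT_d_cont)
    (fun x y => @mc_d_ge0 R X _ _) (fun x => @mc_d_refl R X _)
    (fun x y z => @mc_d_triangle R X _ _ _) subT_sep subT_d_cont.

End SubT.

Section IfDir.
Variables (R : realType) (X : MetCH R) (g : submetric X).
Hypothesis href : corel_reflexive g.
Hypothesis hsym : corel_symmetric g.

Definition Aset := [set a : X | g (a, false) (a, true) = 0].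
Definition rhoc (x y : X) :=
  ereal_inf [set mc_d X x a + mc_d X a y | a in Aset].

Lemma Aset_both a b : Aset a -> g (a, b) (a, ~~ b) = 0.
Proof. by move=> Aa; case: b => //=; exact: sm_symA. Qed.

Lemma g_cross_le x y b : g (x, b) (y, ~~ b) <= rhoc x y.
Proof.
apply: le_ereal_inf_tmp => _ [a Aa <-].
apply: (le_trans (sm_triangle g _ (a, b) _)).
rewrite sm_same //; apply: leeD => //.
apply: (le_trans (sm_triangle g _ (a, ~~ b) _)).
by rewrite Aset_both // add0e sm_same.
Qed.

Lemma q_mor b : is_mor (mc_d X) (sm_dS g) (sm_q g b).
Proof. by split; [exact: sm_q_cont | move=> x y; rewrite sm_dS_q sm_same]. Qed.

Lemma if_dir : (forall x y i, g (x, i) (y, ~~ i) = rhoc x y) -> effective g.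
Proof.
move=> H E i [imor iq univ].
split; [exact: q_mor | exact: q_mor | exact: iq |].
move=> Z h k hm km hk.
have hkA : forall a, Aset a -> h a = k a.
  move=> a Aa.
  have Ccl : closed [set a].
    apply: accessible_closed_set1; apply: hausdorff_accessible; exact: (@mc_hausdorff R X).
  pose E1 := subT_MetCH Ccl.
  pose j := (set_val : E1 -> X).
  have jm : is_mor (mc_d E1) (mc_d X) j by split; [exact: subT_cont | by []].
  have jq : sm_q g false \o j = sm_q g true \o j.
    apply: funext => z /=; have -> : j z = a by exact: (set_valP z).
    by apply: sm_q_eq => //; exact: sm_symA.
  have [v [[_ iv] _]] := univ E1 j jm jq.
  pose pt : E1 := SigSub (mem_set (erefl a : [set a] a)).
  have e1 : i (v pt) = a by have := congr1 (fun f => f pt) iv.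
  have := congr1 (fun f => f (v pt)) hk; by rewrite /= e1.
pose F (p : X * bool) := if p.2 then k p.1 else h p.1.
have Fb : forall b, is_mor (mc_d X) (mc_d Z) (fun x => F (x, b)).
  by case.
have FA : forall a b, Aset a -> F (a, b) = F (a, ~~ b).
  by move=> a [] Aa; rewrite /F /= hkA.
have Fcross : forall x y b, mc_d Z (F (x, b)) (F (y, ~~ b)) <= rhoc x y.
  move=> x y b; apply: le_ereal_inf_tmp => _ [a Aa <-].
  apply: (le_trans (@mc_d_triangle R Z _ (F (a, b)) _)).
  apply: leeD; first exact: (Fb b).2.
  by rewrite FA //; exact: (Fb (~~ b)).2.
have Fne : forall p q, mc_d Z (F p) (F q) <= g p q.
  move=> [x b] [y c]; case: (boolP (b == c)) => [/eqP <-|bc].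
    by rewrite sm_same //; exact: (Fb b).2.
  have -> : c = ~~ b by move: bc; case: b; case: c.
  by rewrite H; exact: Fcross.
have Fresp : forall p q, g p q = 0 -> g q p = 0 -> F p = F q.
  move=> p q h1 h2; apply: (@mc_d_sep R Z).
    by apply/eqP; rewrite eq_le mc_d_ge0 andbT -h1 Fne.
  by apply/eqP; rewrite eq_le mc_d_ge0 andbT -h2 Fne.
have Frepr : forall p, F (repr (\pi_({eq_quot sm_equiv g}) p)) = F p.
  move=> p; have [h1 h2] := (sm_piP _ _ _).1 (reprK (\pi_({eq_quot sm_equiv g}) p)).
  exact: Fresp.
have Fcont : continuous F.
  move=> [x b] U /=; rewrite /F /=.
  case: b => nU; rewrite nbhs_simpl /=.
  - exists (k @^-1` U, [set true]); first by split; [exact: km.1 | exact: discrete_set1].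
    by move=> [y c] /= [ky ->].
  - exists (h @^-1` U, [set false]); first by split; [exact: hm.1 | exact: discrete_set1].
    by move=> [y c] /= [hy ->].
exists (F \o repr); split; first split.
- split.
  + apply/quotient_continuous.
    have -> : (F \o repr) \o \pi_(sm_S g) = F.
      by apply: funext => p /=; exact: Frepr.
    exact: Fcont.
  + by move=> s t; exact: Fne.
- split; apply: funext => x /=; exact: Frepr.
- move=> u' [_ [u0 u1]]; apply: funext => s.
  rewrite -(reprK s); case: (repr s) => x b.
  rewrite /= Frepr /F /=; case: b.
  + by have := congr1 (fun f => f x) u1.
  + by have := congr1 (fun f => f x) u0.
Qed.

End IfDir.

Section Ereal.
Variable R : realType.

Lemma ereal_dense (u w : \bar R) : u < w -> exists v : R, u < v%:E < w.
Proof.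
case: u => [u||]; case: w => [w||] //= h.
- exists ((u + w) / 2)%R; rewrite !lte_fin; move: h; rewrite lte_fin => h.
  by have [-> ->] := midf_lt h.
- by exists (u + 1)%R; rewrite lte_fin ltry andbT; lra.
- by exists (w - 1)%R; rewrite lte_fin ltNyr /=; lra.
- by exists 0%R; rewrite ltNyr ltry.
Qed.

Lemma Ladd (v p q : \bar R) : 0 <= p -> 0 <= q -> v < p + q ->
  exists a b : \bar R, [/\ a < p, b < q & forall p' q', 0 <= p' -> 0 <= q' ->
     a < p' -> b < q' -> v < p' + q'].
Proof.
move=> hp hq hv.
case: (ltP v 0) => v0.
  exists -oo, -oo; split.
  - by apply: lt_le_trans hp; rewrite ltNyr.
  - by apply: lt_le_trans hq; rewrite ltNyr.
  - by move=> p' q' hp' hq' _ _; apply: lt_le_trans v0 _; exact: adde_ge0.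
have [r vr] : exists r : R, v = r%:E.
  move: v0 hv; case: v => [r _ _|_|//]; first by exists r.
  by rewrite ltNge leey.
subst v.
suff [a [b [ha hb ab]]] : exists a b : R, [/\ a%:E < p, b%:E < q & (a + b = r)%R].
  exists a%:E, b%:E; split => // p' q' _ _ h1 h2.
  by have := lteD h1 h2; rewrite -EFinD ab.
move: hv hp hq; case: p => [a||]; case: q => [b||] //= hv hp hq.
- move: hv; rewrite -EFinD lte_fin => hv.
  have hd : (0 < (a + b - r) / 2)%R by apply: divr_gt0 => //; lra.
  exists (a - (a + b - r) / 2)%R, (b - (a + b - r) / 2)%R.
  rewrite !lte_fin; split; [lra|lra|].
  have := splitr (a + b - r)%R; lra.
- by exists (a - 1)%R, (r - a + 1)%R; rewrite lte_fin ltry; split => //; lra.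
- by exists (r - b + 1)%R, (b - 1)%R; rewrite lte_fin ltry; split => //; lra.
- by exists 0%R, r; rewrite !ltry; split => //; lra.
Qed.

End Ereal.

Section Lsc.
Variables (R : realType) (X : MetCH R) (g : submetric X).

Lemma diag_cont : continuous (fun a : X => ((a, false), (a, true))).
Proof.
move=> a W [[P Q] /= [Pa Qa] PQW]; rewrite nbhs_simpl /=.
have h1 : nbhs a [set x | P (x, false)] := @pairb_cont X false a _ Pa.
have h2 : nbhs a [set x | Q (x, true)] := @pairb_cont X true a _ Qa.
near=> y; apply: PQW; split; [exact: (near h1 y)|exact: (near h2 y)].
Unshelve. all: by end_near.
Qed.

Lemma Aset_closed : closed (Aset g).
Proof.
have -> : Aset g = ~` [set a : X | 0 < g (a, false) (a, true)].
  rewrite predeqE => a; split.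
    by rewrite /Aset /= => ->; rewrite ltxx.
  move=> /negP; rewrite -leNgt => h; apply/eqP; rewrite eq_le h sm_ge0.
  done.
apply: open_closedC.
have := (continuousP _).1 diag_cont _ (@sm_cont R X g 0).
by congr open.
Qed.

Lemma Aset_compact : compact (Aset g).
Proof.
rewrite -[Aset g]setTI; apply: compact_closedI; [exact: mc_compact | exact: Aset_closed].
Qed.

Lemma rhoc_lsc u : open [set p : X * X | u < rhoc g p.1 p.2].
Proof.
rewrite openE => -[x0 y0] /= hu.
have [v /andP [uv vr]] := ereal_dense hu.
have cover : forall a, Aset g a -> \forall a' \near a & p \near nbhs (x0, y0),
    v%:E < mc_d X p.1 a' + mc_d X a' p.2.
  move=> a Aa.
  have : v%:E < mc_d X x0 a + mc_d X a y0.
    by apply: lt_le_trans vr _; apply: ereal_inf_lbound; exists a.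
  move=> /(Ladd (mc_d_ge0 _ _) (mc_d_ge0 _ _)) [al [be [h1 h2 h3]]].
  have n1 : nbhs (x0, a) [set p : X * X | al < mc_d X p.1 p.2].
    by apply: open_nbhs_nbhs; split; [exact: mc_d_cont|].
  have n2 : nbhs (a, y0) [set p : X * X | be < mc_d X p.1 p.2].
    by apply: open_nbhs_nbhs; split; [exact: mc_d_cont|].
  move: n1 n2 => [[P1 Q1] /= [P1x Q1a] S1] [[P2 Q2] /= [P2a Q2y] S2].
  exists (Q1 `&` P2, P1 `*` Q2) => /=.
    split; first exact: filterI.
    by exists (P1, Q2).
  move=> [a' [x y]] /= [[Q1a' P2a'] [P1x' Q2y']].
  apply: h3; try exact: mc_d_ge0.
    exact: (S1 (x, a')).
  exact: (S2 (a', y)).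
have PP : \forall p \near nbhs (x0, y0), Aset g `<=`
    (fun a => v%:E < mc_d X p.1 a + mc_d X a p.2).
  have K := (compact_near_coveringP _).1 Aset_compact.
  exact: (K _ (nbhs (x0, y0)) (fun p a => v%:E < mc_d X p.1 a + mc_d X a p.2) _ cover).
change (nbhs (x0, y0) [set p : X * X | u < rhoc g p.1 p.2]).
near=> p; have hK := near PP p.
apply: lt_le_trans uv _; apply: le_ereal_inf_tmp => _ [a Aa <-].
by apply/ltW; apply: hK.
Unshelve. all: by end_near.
Qed.

End Lsc.

Section Attain.
Variables (R : realType) (X : MetCH R) (g : submetric X).

Lemma rhoc0_attain x y : rhoc g x y = 0 ->
  exists2 a, Aset g a & mc_d X x a = 0 /\ mc_d X a y = 0.
Proof.
move=> h0; apply: contrapT => nex.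
have pos : forall a, Aset g a -> 0 < mc_d X x a + mc_d X a y.
  move=> a Aa; rewrite lt_def adde_ge0 ?mc_d_ge0 // andbT.
  rewrite padde_eq0 ?mc_d_ge0 //; apply/negP => /andP [/eqP h1 /eqP h2].
  by apply: nex; exists a.
have cover : forall a, Aset g a -> \forall a' \near a & n \near \oo,
    ((n.+1%:R)^-1)%:E < mc_d X x a' + mc_d X a' y.
  move=> a Aa.
  have [c /andP [c0 cf]] := ereal_dense (pos a Aa).
  move: c0; rewrite lte_fin => c0.
  have [al [be [h1 h2 h3]]] := Ladd (mc_d_ge0 _ _) (mc_d_ge0 _ _) cf.
  have n1 : nbhs (x, a) [set p : X * X | al < mc_d X p.1 p.2].
    by apply: open_nbhs_nbhs; split; [exact: mc_d_cont|].
  have n2 : nbhs (a, y) [set p : X * X | be < mc_d X p.1 p.2].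
    by apply: open_nbhs_nbhs; split; [exact: mc_d_cont|].
  move: n1 n2 => [[P1 Q1] /= [P1x Q1a] S1] [[P2 Q2] /= [P2a Q2y] S2].
  exists (Q1 `&` P2, [set n : nat | (c^-1 <= n%:R)%R]) => /=.
    split; first exact: filterI.
    exact: nbhs_infty_ger.
  move=> [a' n] /= [[Q1a' P2a'] hn].
  apply: lt_trans (h3 _ _ (mc_d_ge0 _ _) (mc_d_ge0 _ _) _ _).
  - rewrite lte_fin invf_plt ?posrE //.
    by apply: le_lt_trans hn _; rewrite ltr_nat.
  - by apply: (S1 (x, a')); split => //; exact: nbhs_singleton.
  - by apply: (S2 (a', y)); split => //; exact: nbhs_singleton.
have PP : \forall n \near \oo, Aset g `<=`
    (fun a => ((n.+1%:R)^-1)%:E < mc_d X x a + mc_d X a y).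
  have K := (compact_near_coveringP _).1 (@Aset_compact R X g).
  exact: (K _ \oo (fun n a => ((n.+1%:R)^-1)%:E < mc_d X x a + mc_d X a y) _ cover).
have [n hn] := filter_ex PP.
have : ((n.+1%:R)^-1)%:E <= rhoc g x y.
  apply: le_ereal_inf_tmp => _ [a Aa <-]; apply/ltW; exact: hn.
by rewrite h0 lee_fin leNgt invr_gt0 ltr0n.
Qed.

End Attain.

Lemma Linf (R : realType) (T : Type) (A : set T) (f : T -> \bar R) (t c : \bar R) :
  (forall a, A a -> 0 <= f a) -> 0 <= c ->
  (forall a, A a -> t <= c + f a) -> t <= c + ereal_inf [set f a | a in A].
Proof.
move=> f0 c0 h.
have i0 : 0 <= ereal_inf [set f a | a in A].
  by apply: le_ereal_inf_tmp => _ [a Aa <-]; exact: f0.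
move: c0 h; case: c => [r||] // c0 h.
- rewrite -leeBlDl //; apply: le_ereal_inf_tmp => _ [a Aa <-].
  by rewrite leeBlDl //; exact: h.
- by rewrite addye ?leey // gt_eqF // (lt_le_trans _ i0) // ltNy0.
Qed.

Section Rho.
Variables (R : realType) (X : MetCH R) (g : submetric X).
Local Notation d := (mc_d X).
Local Notation A := (Aset g).
Local Notation rc := (rhoc g).

Lemma rhoc_ge0 x y : 0 <= rc x y.
Proof. by apply: le_ereal_inf_tmp => _ [a Aa <-]; rewrite adde_ge0 ?mc_d_ge0. Qed.

Lemma rhoc_le x y a : A a -> rc x y <= d x a + d a y.
Proof. by move=> Aa; apply: ereal_inf_lbound; exists a. Qed.

Lemma tri_sc x y z : rc x z <= d x y + rc y z.
Proof.
apply: Linf => //; first by move=> a _; rewrite adde_ge0 ?mc_d_ge0.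
  exact: mc_d_ge0.
move=> a Aa /=; apply: (le_trans (rhoc_le x z Aa)).
by rewrite addeA leeD2r // mc_d_triangle.
Qed.

Lemma tri_cs x y z : rc x z <= rc x y + d y z.
Proof.
rewrite addeC; apply: Linf => //; first by move=> a _; rewrite adde_ge0 ?mc_d_ge0.
  exact: mc_d_ge0.
move=> a Aa /=; apply: (le_trans (rhoc_le x z Aa)).
by rewrite [d y z + _]addeC -addeA leeD2l // mc_d_triangle.
Qed.

Lemma tri_cc x y z : d x z <= rc x y + rc y z.
Proof.
rewrite addeC; apply: Linf => //; first by move=> a _; rewrite adde_ge0 ?mc_d_ge0.
  exact: rhoc_ge0.
move=> a Aa /=; rewrite addeC; apply: Linf => //.
  by move=> b _; rewrite adde_ge0 ?mc_d_ge0.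
  by rewrite adde_ge0 ?mc_d_ge0.
move=> b Bb /=.
apply: (le_trans (mc_d_triangle x a z)); rewrite -addeA leeD2l //.
apply: (le_trans (mc_d_triangle a y z)); rewrite leeD2l //.
exact: mc_d_triangle.
Qed.

Definition rho (p q : X * bool) : \bar R :=
  if p.2 == q.2 then d p.1 q.1 else rc p.1 q.1.

Lemma rho_ge0 p q : 0 <= rho p q.
Proof. by rewrite /rho; case: ifP => _; [exact: mc_d_ge0 | exact: rhoc_ge0]. Qed.

Lemma rho_refl p : rho p p = 0.
Proof. by rewrite /rho eqxx mc_d_refl. Qed.

Lemma rho_tri p q r : rho p r <= rho p q + rho q r.
Proof.
case: p q r => [x b] [y c] [z e]; rewrite /rho /=.
by case: b; case: c; case: e => /=;
  rewrite ?mc_d_triangle ?tri_sc ?tri_cs ?tri_cc.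
Qed.

Lemma rho_cross x y b : rho (x, b) (y, ~~ b) = rc x y.
Proof. by rewrite /rho /=; case: b. Qed.

Lemma rho_same x y b : rho (x, b) (y, b) = d x y.
Proof. by rewrite /rho /= eqxx. Qed.

Definition zglue (p q : X * bool) : bool :=
  (p == q) || ((p.1 == q.1) && `[< A p.1 >]).

Lemma zglue_refl : reflexive zglue.
Proof. by move=> p; rewrite /zglue eqxx. Qed.

Lemma zglue_sym : symmetric zglue.
Proof.
move=> p q; rewrite /zglue eq_sym; congr orb.
by case: (boolP (p.1 == q.1)) => [/eqP ->|]; rewrite ?eqxx // eq_sym => /negbTE ->.
Qed.

Lemma zglue_trans : transitive zglue.
Proof.
move=> q p r; rewrite /zglue => /orP [/eqP ->|/andP [/eqP e1 h1]] //.
move=> /orP [/eqP <-|/andP [/eqP e2 h2]].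
  by rewrite h1 e1 eqxx orbT.
by rewrite h1 e1 e2 eqxx orbT.
Qed.

Definition zglue_equiv : equiv_rel (X * bool) :=
  EquivRel zglue zglue_refl zglue_sym zglue_trans.

Lemma rhoc_refl a : A a -> rc a a = 0.
Proof.
move=> Aa; apply/eqP; rewrite eq_le rhoc_ge0 andbT.
by apply: (le_trans (rhoc_le a a Aa)); rewrite mc_d_refl adde0.
Qed.

Lemma zglue_rho0 p q : zglue p q -> rho p q = 0 /\ rho q p = 0.
Proof.
move=> /orP [/eqP ->|/andP [/eqP e /asboolP Ap]]; first by rewrite rho_refl.
case: p q e Ap => [x b] [y c] /= <- Ax; rewrite /rho /=.
by case: b; case: c => /=; rewrite ?mc_d_refl ?(rhoc_refl Ax).
Qed.

Lemma rho_inv p p' q q' : zglue p p' -> zglue q q' -> rho p q = rho p' q'.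
Proof.
move=> /zglue_rho0 [h1 h2] /zglue_rho0 [h3 h4].
apply/eqP; rewrite eq_le; apply/andP; split.
- apply: (le_trans (rho_tri p p' q)); rewrite h1 add0e.
  by apply: (le_trans (rho_tri p' q' q)); rewrite h4 adde0.
- apply: (le_trans (rho_tri p' p q')); rewrite h2 add0e.
  by apply: (le_trans (rho_tri p q q')); rewrite h3 adde0.
Qed.

Lemma rho_sep p q : rho p q = 0 -> rho q p = 0 -> zglue p q.
Proof.
case: p q => [x b] [y c]; rewrite /rho /=.
case: (boolP (b == c)) => [/eqP <-|bc].
  by rewrite eqxx => h1 h2; rewrite /zglue (mc_d_sep h1 h2) eqxx.
rewrite eq_sym (negbTE bc) => h1 h2.
have [a Aa [xa ay]] := rhoc0_attain h1.
have [a' Aa' [ya' a'x]] := rhoc0_attain h2.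
have ex : x = a.
  apply: mc_d_sep => //; apply/eqP; rewrite eq_le mc_d_ge0 andbT.
  apply: (le_trans (mc_d_triangle a y x)); rewrite ay add0e.
  by apply: (le_trans (mc_d_triangle y a' x)); rewrite ya' a'x adde0.
have ey : y = a.
  apply: mc_d_sep => //; apply/eqP; rewrite eq_le mc_d_ge0 andbT.
  apply: (le_trans (mc_d_triangle y a' a)); rewrite ya' add0e.
  by apply: (le_trans (mc_d_triangle a' x a)); rewrite a'x xa adde0.
by rewrite /zglue /= ex ey eqxx andTb; apply/orP; right; apply/asboolP.
Qed.

End Rho.

Lemma openX (T U : topologicalType) (P : set T) (Q : set U) :
  open P -> open Q -> open (P `*` Q).
Proof.
move=> oP oQ; rewrite openE => -[x y] [/= Px Qy].
exists (P, Q) => //; split; apply: open_nbhs_nbhs; split => //.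
Qed.

Lemma nbhs_mono (T : topologicalType) (x : T) (P Q : set T) :
  P `<=` Q -> nbhs x P -> nbhs x Q.
Proof. by move=> PQ; exact: filterS. Qed.

Lemma nbhsI (T : topologicalType) (x : T) (P Q : set T) :
  nbhs x P -> nbhs x Q -> nbhs x (P `&` Q).
Proof. exact: filterI. Qed.

Lemma open_nbhs' (T : topologicalType) (x : T) (U : set T) :
  open U -> U x -> nbhs x U.
Proof. by move=> oU Ux; apply: open_nbhs_nbhs; split. Qed.

Section Zdef.
Variables (R : realType) (X : MetCH R) (g : submetric X).
Local Notation d := (mc_d X).
Local Notation A := (Aset g).

Definition ZQ := {eq_quot (@zglue_equiv R X g)}.
Definition Zt : topologicalType := quotient_topology ZQ.
Definition piZ (p : X * bool) : Zt := (\pi_ZQ p : ZQ).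
Definition dZ (s t : Zt) : \bar R := rho g (repr (s : ZQ)) (repr (t : ZQ)).

Lemma piZ_eq p q : piZ p = piZ q <-> zglue g p q.
Proof. by split => [/eqquotP|h]; [|apply/eqquotP]. Qed.

Lemma piZ_repr (s : Zt) : piZ (repr (s : ZQ)) = s.
Proof. exact: reprK. Qed.

Lemma dZ_pi p q : dZ (piZ p) (piZ q) = rho g p q.
Proof.
rewrite /dZ; apply: rho_inv.
  by apply/(piZ_eq _ _).1; rewrite piZ_repr.
by apply/(piZ_eq _ _).1; rewrite piZ_repr.
Qed.

Lemma piZ_cont : continuous piZ.
Proof. exact: (@pi_continuous _ ZQ). Qed.

Lemma Z_compact : compact [set: Zt].
Proof.
have -> : [set: Zt] = piZ @` [set: X * bool].
  rewrite predeqE => s; split => // _; exists (repr (s : ZQ)) => //.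
  exact: piZ_repr.
apply: continuous_compact.
  by apply: continuous_subspaceT; exact: piZ_cont.
rewrite -setXTT; apply: compact_setX; [exact: mc_compact | exact: bool_compact].
Qed.

Lemma rho_open (b c : bool) u :
  open [set xy : X * X | u < rho g (xy.1, b) (xy.2, c)].
Proof.
rewrite /rho /=; case: (b == c); [exact: mc_d_cont | exact: rhoc_lsc].
Qed.

Definition Bs (x : X) (i : bool) := [set b : bool | A x \/ b = i].

Lemma Bs_glue x i b : Bs x i b -> zglue g (x, i) (x, b).
Proof.
rewrite /Bs /zglue /= => -[Ax|->]; last by rewrite eqxx.
by apply/orP; right; rewrite eqxx; apply/asboolP.
Qed.

Lemma sat_rect (N : set X) x0 i0 : N `<=` [set x | ~ A x0 -> ~ A x] ->
  piZ @^-1` (piZ @` (N `*` Bs x0 i0)) = N `*` Bs x0 i0.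
Proof.
move=> NA; rewrite predeqE => -[y c]; split; last by move=> h; exists (y, c).
move=> [[x b] [/= Nx Bb] /(piZ_eq _ _).1 /orP [/eqP [<- <-]|/andP [/= /eqP exy /asboolP Ax]]].
  by [].
subst y; split => //=; rewrite /Bs /=; left.
by apply: contrapT => nA; exact: (NA x Nx nA Ax).
Qed.

Lemma open_sat (N : set X) x0 i0 : open N -> N `<=` [set x | ~ A x0 -> ~ A x] ->
  open (piZ @` (N `*` Bs x0 i0) : set (Zt)).
Proof.
move=> oN NA.
rewrite /open /= /quotient_open.
have -> : \pi_(Zt) @^-1` (piZ @` (N `*` Bs x0 i0)) = N `*` Bs x0 i0.
  exact: sat_rect.
by apply: openX => //; exact: discrete_open.
Qed.

Lemma nbhs_good x0 : nbhs x0 [set x | ~ A x0 -> ~ A x].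
Proof.
case: (pselect (A x0)) => Ax0.
  by apply: (nbhs_mono _ (@filterT _ _ _)) => x _ /(_ Ax0).
have : nbhs x0 (~` A).
  apply: open_nbhs_nbhs; split => //; apply: closed_openC; exact: Aset_closed.
by apply: nbhs_mono => x nAx _.
Qed.

Lemma Zd_cont u : open [set p : Zt * Zt | u < dZ p.1 p.2].
Proof.
rewrite openE => -[s0 t0] /= hu.
change (nbhs (s0, t0) [set p : Zt * Zt | u < dZ p.1 p.2]).
rewrite -(piZ_repr s0) -(piZ_repr t0) in hu *.
case: (repr (s0 : ZQ)) hu => x0 i0.
case: (repr (t0 : ZQ)) => y0 j0 hu.
rewrite dZ_pi in hu.
have S : forall b c, nbhs (x0, y0) [set xy : X * X |
    Bs x0 i0 b -> Bs y0 j0 c -> u < rho g (xy.1, b) (xy.2, c)].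
  move=> b c; case: (pselect (Bs x0 i0 b /\ Bs y0 j0 c)) => [[hb hc]|nh].
    have hu' : u < rho g (x0, b) (y0, c).
      by rewrite -(rho_inv (Bs_glue hb) (Bs_glue hc)).
    have : nbhs (x0, y0) [set xy : X * X | u < rho g (xy.1, b) (xy.2, c)].
      by apply: open_nbhs_nbhs; split; [exact: rho_open|].
    by apply: nbhs_mono => xy h _ _.
  apply: (nbhs_mono _ (@filterT _ _ _)) => xy _ hb hc; exfalso; exact: nh.
have HT : nbhs (x0, y0) [set xy : X * X | forall b c,
    Bs x0 i0 b -> Bs y0 j0 c -> u < rho g (xy.1, b) (xy.2, c)].
  have := nbhsI (nbhsI (S true true) (S true false))
                  (nbhsI (S false true) (S false false)).
  move=> H; apply: (nbhs_mono _ H) => xy [[h1 h2] [h3 h4]] [] [] //.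
move: HT => [[N1 M1] /= [N1x M1y] NM].
have := nbhsI N1x (nbhs_good x0); rewrite nbhsE => -[N [oN Nx] NN].
have := nbhsI M1y (nbhs_good y0); rewrite nbhsE => -[M [oM My] MM].
exists (piZ @` (N `*` Bs x0 i0), piZ @` (M `*` Bs y0 j0)) => /=.
  split; apply: (@open_nbhs' Zt).
  - by apply: open_sat => // x /NN [].
  - by exists (x0, i0) => //; split => //; right.
  - by apply: open_sat => // x /MM [].
  - by exists (y0, j0) => //; split => //; right.
move=> [s t] /= [[[x b] [/= Nx' Bb] <-] [[y c] [/= My' Bc] <-]].
rewrite dZ_pi.
have := NM (x, y); rewrite /=; apply => //.
by split; [case: (NN x Nx') | case: (MM y My')].
Qed.

End Zdef.

Section ZM.
Variables (R : realType) (X : MetCH R) (g : submetric X).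

Local Notation Z := (Zt g).
Local Notation pZ := (@piZ R X g).
Local Notation dz := (@dZ R X g).

Lemma dZ_ge0 s t : 0 <= dz s t.
Proof. exact: rho_ge0. Qed.

Lemma dZ_refl s : dz s s = 0.
Proof. exact: rho_refl. Qed.

Lemma dZ_tri s t r : dz s r <= dz s t + dz t r.
Proof. exact: rho_tri. Qed.

Lemma dZ_sep s t : dz s t = 0 -> dz t s = 0 -> s = t.
Proof.
move=> h1 h2; rewrite -(piZ_repr s) -(piZ_repr t).
by apply/piZ_eq; exact: rho_sep.
Qed.

Definition ZM : MetCH R :=
  @MkMetCH R Z dz (@Z_compact R X g)
    (sep_lsc_hausdorff dZ_refl dZ_sep dZ_ge0 (@Zd_cont R X g))
    dZ_ge0 dZ_refl dZ_tri dZ_sep (@Zd_cont R X g).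

Lemma hZ_mor b : is_mor (mc_d X) (mc_d ZM) (fun x => pZ (x, b)).
Proof.
split.
  move=> x; apply: (@continuous_comp _ _ _ (fun x : X => (x, b)) pZ).
    exact: pairb_cont.
  exact: piZ_cont.
by move=> x y /=; rewrite dZ_pi rho_same.
Qed.

End ZM.

Section Eq.
Variables (R : realType) (X : MetCH R) (g : submetric X).
Hypothesis hsym : corel_symmetric g.

Local Notation E := (subT_MetCH (@Aset_closed R X g)).

Lemma eqlz : is_equaliser (sm_dS g) (set_val : E -> X) (sm_q g false) (sm_q g true).
Proof.
split.
- by split; [exact: subT_cont | move=> a b].
- apply: funext => a /=.
  have Aa : Aset g (set_val a) := set_valP a.
  apply: sm_q_eq => //; exact: sm_symA.
- move=> Z j jm jq.
  have jA : forall z, Aset g (j z).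
    by move=> z; apply: sm_q_eqE; exact: (congr1 (fun f => f z) jq).
  exists (fun z => (SigSub (mem_set (jA z)) : E)); split; first split.
  + split.
      apply: (@continuous_comp_initial _ _ _ set_val); exact: jm.1.
    by move=> a b; exact: jm.2.
  + by apply: funext.
  + move=> u' [_ hu']; apply: funext => z; apply: val_inj => /=.
    exact: (congr1 (fun f => f z) hu').
Qed.

End Eq.

Unset Implicit Arguments.

Theorem lemma5p12 (R : realType) (X : MetCH R) (g : submetric X) :
  equivalence_submetric g ->
  (effective g <->
   forall (x y : X) (i : bool),
     g (x, i) (y, ~~ i) =
       ereal_inf [set mc_d X x a + mc_d X a y
                 | a in [set a : X | g (a, false) (a, true) = 0]]).
Proof.
move=> [href hsym _]; split; last exact: if_dir.
move=> eff x y i.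
have [_ _ _ univ] := eff _ _ (eqlz hsym).
have hk : (fun x => @piZ R X g (x, false)) \o set_val =
          (fun x => @piZ R X g (x, true)) \o
          (set_val : subT_MetCH (@Aset_closed R X g) -> X).
  apply: funext => a /=; apply/piZ_eq.
  rewrite /zglue /= eqxx andTb; apply/orP; right; apply/asboolP.
  exact: set_valP.
have [u [[[_ une] [u0 u1]] _]] :=
  univ (ZM g) _ _ (hZ_mor g false) (hZ_mor g true) hk.
change (g (x, i) (y, ~~ i) = rhoc g x y).
apply/eqP; rewrite Order.POrderTheory.eq_le g_cross_le //=.
have e : forall b z, @piZ R X g (z, b) = u (sm_q g b z).
  move=> [] z.
  - by have := congr1 (fun f => f z) u1.
  - by have := congr1 (fun f => f z) u0.
have := une (sm_q g i x) (sm_q g (~~ i) y).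
by rewrite /= -!e dZ_pi rho_cross sm_dS_q.
Qed.
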